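(* Let $h$ and $k$ be relatively prime odd integers with $k>0$. Then $$B_{1}(h,k)=\frac{h}{4k}\,Y(h,k)+\frac{1}{2k}-\frac{1}{2}.$$
   Context: $[x]$ denotes the greatest integer $\le x$, and $((x))=x-[x]-\tfrac12$ if $x\notin\mathbb{Z}$, $((x))=0$ if $x\in\mathbb{Z}$. For integers $h,k$ with $k>0$, $\gcd(h,k)=1$: $$B_{1}(h,k)=\sum_{j=1}^{k-1}(-1)^{j+\left[\frac{hj}{k}\right]}\left[\frac{hj}{k}\right],\qquad Y(h,k)=4k\sum_{j \bmod k}(-1)^{j+\left[\frac{hj}{k}\right]}\left(\left(\frac{j}{k}\right)\right),$$ the latter sum over a complete residue system modulo $k$ (the Simsek sum). *)

(* Defs.v *)
From mathcomp Require Import all_boot all_order all_algebra.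
Set Implicit Arguments. Unset Strict Implicit. Unset Printing Implicit Defensive.
Import Order.TTheory GRing.Theory Num.Theory.
Local Open Scope ring_scope.

Definition gint (x : rat) : int := Num.floor x.

Definition saw (x : rat) : rat :=
  if x \is a Num.int then 0 else x - (gint x)%:~R - 1 / 2.

Definition B1 (h k : int) : rat :=
  \sum_(1 <= j < `|k|%N)
     (-1) ^+ (j + `|gint ((h * j%:Z)%:~R / k%:~R)|%N)%N
       * (gint ((h * j%:Z)%:~R / k%:~R))%:~R.

Definition Y (h k : int) : rat :=
  4%:R * k%:~R *
  \sum_(0 <= j < `|k|%N)
     (-1) ^+ (j + `|gint ((h * j%:Z)%:~R / k%:~R)|%N)%N
       * saw (j%:R / k%:~R).

(* Main.v *)
Require Import Defs.
From mathcomp Require Import all_boot all_order all_algebra.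
From mathcomp Require Import zify ring.
Import Order.TTheory GRing.Theory Num.Theory.
Local Open Scope ring_scope.

Lemma alt1 m : \sum_(j < (m.*2).+1) (-1) ^+ j = 1 :> rat.
Proof.
elim: m => [|m IH]; first by rewrite big_ord1.
rewrite doubleS (big_ord_recr (m.*2.+2)) (big_ord_recr (m.*2.+1)) /= IH !exprS.
ring.
Qed.

Lemma alt2 m : \sum_(j < (m.*2).+1) (-1) ^+ j * j%:R = m%:R :> rat.
Proof.
elim: m => [|m IH]; first by rewrite big_ord1 mulr0.
rewrite doubleS (big_ord_recr (m.*2.+2)) (big_ord_recr (m.*2.+1)) /= IH !exprS.
rewrite -signr_odd odd_double /= expr0 -mul2n. rewrite -[(2 * m).+2]addn2 -[(2 * m).+1]addn1 -[m.+1]addn1 !natrD. ring.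
Qed.

Section S.
Variables (h : int) (n : nat).
Hypothesis n0 : (0 < n)%N.
Hypothesis hodd : ~~ (2 %| h)%Z.
Hypothesis nodd : ~~ (2 %| n%:Z)%Z.
Hypothesis cop : coprimez h n.

Let q (j : nat) : int := ((h * j%:Z) %/ n%:Z)%Z.
Let r (j : nat) : int := ((h * j%:Z) %% n%:Z)%Z.

Lemma r_ge0 j : 0 <= r j.
Proof. rewrite /r modz_ge0 //; lia. Qed.
Lemma r_lt j : r j < n%:Z.
Proof. rewrite /r ltz_pmod //; lia. Qed.
Lemma hj_eq j : h * j%:Z = q j * n%:Z + r j.
Proof. exact: divz_eq. Qed.

Lemma gint_q j : gint ((h * j%:Z)%:~R / (n%:Z)%:~R) = q j.
Proof.
rewrite /gint; apply: floor_def.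
have n0' : (0 : rat) < (n%:Z)%:~R by rewrite ltr0z; lia.
rewrite ler_pdivlMr // ltr_pdivrMr // -!intrM ler_int ltr_int.
have := r_ge0 j; have := r_lt j; have := hj_eq j. lia.
Qed.

Lemma rat_eq j : (h * j%:Z)%:~R / (n%:Z)%:~R = (q j)%:~R + (r j)%:~R / (n%:Z)%:~R :> rat.
Proof.
have n0' : (n%:Z)%:~R != 0 :> rat by rewrite intr_eq0; lia.
rewrite hj_eq intrD intrM. field. done.
Qed.

Lemma sign_eq j : (-1) ^+ (j + `|q j|)%N = (-1) ^+ `|r j|%N :> rat.
Proof.
rewrite -[LHS]signr_odd -[RHS]signr_odd; congr (_ ^+ _).
suff: (odd (j + `|q j|)%N : nat) = odd `|r j|%N by do 2 case: odd.
rewrite -!modn2.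
have := r_ge0 j; have := hj_eq j.
have h2 : (h %% 2)%Z = 1.
  move: hodd; case: dvdz_mod0P => // H _. have := modz_ge0 h (_ : 2 != 0). have := ltz_pmod h (_ : 0 < 2). lia.
have n2 : (n%:Z %% 2)%Z = 1.
  move: nodd; case: dvdz_mod0P => // H _. have := modz_ge0 n (_ : 2 != 0). have := ltz_pmod n (_ : 0 < 2). lia.
have := divz_eq h 2; have := divz_eq n 2.
set a := (h %/ 2)%Z; set b := (n%:Z %/ 2)%Z; rewrite h2 n2 => En Eh.
rewrite Eh En.
move=> E.
have E1 : q j + r j = (a * 2 + 1) * j%:Z - q j * b * 2 by rewrite E; ring.
have E2 : j%:Z = q j + r j + 2 * (q j * b - a * j%:Z) by rewrite E1; ring.
move=> ?; lia.
Qed.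

Lemma copn : coprimez n h.
Proof. by rewrite /coprimez gcdzC. Qed.

Lemma dvd_eq0 (i j : nat) : (i < n)%N -> (j < n)%N -> (n%:Z %| h * i%:Z - h * j%:Z)%Z -> i = j.
Proof.
move=> ??; rewrite -mulrBr (Gauss_dvdzr _ copn) => /dvdzP [c Hc].
have : (c = 0)%R by nia. move=> c0. rewrite c0 mul0r in Hc. lia.
Qed.

Lemma r_inj (i j : nat) : (i < n)%N -> (j < n)%N -> r i = r j -> i = j.
Proof.
move=> ?? E; apply: dvd_eq0 => //; rewrite -eqz_mod_dvd; exact/eqP.
Qed.

Lemma reidx (F : nat -> rat) : \sum_(j < n) F `|r j|%N = \sum_(j < n) F j.
Proof.
have lt j : (`|r j|%N < n)%N by have := r_ge0 j; have := r_lt j; lia.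
pose s (j : 'I_n) : 'I_n := Ordinal (lt j).
have sinj : injective s.
  move=> i j /(congr1 val) /= E; apply: val_inj => /=.
  apply: r_inj => //. have := r_ge0 i; have := r_ge0 j; lia.
by rewrite [RHS](reindex_inj sinj).
Qed.

Lemma r0 : r 0 = 0.
Proof. by rewrite /r mulr0 mod0z. Qed.
Lemma q0 : q 0 = 0.
Proof. by rewrite /q mulr0 div0z. Qed.

Lemma r_neq0 j : (0 < j < n)%N -> r j != 0.
Proof.
move=> /andP [j0 jn]; apply/eqP => E.
have : j = 0%N by apply: r_inj => //; rewrite E r0.
lia.
Qed.

Lemma saw_eq j : (0 < j < n)%N -> saw (j%:R / (n%:Z)%:~R) = j%:R / n%:R - 1 / 2.
Proof.
move=> /andP [j0 jn].
have n0' : (0 : rat) < n%:R by rewrite ltr0n.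
have fl : Num.floor (j%:R / (n%:Z)%:~R : rat) = 0.
  apply: floor_def; rewrite pmulrn /= -pmulrn ler_pdivlMr // ltr_pdivrMr // mul0r add0r mul1r.
  by rewrite ler0n ltr_nat jn.
rewrite /saw /gint fl.
have -> : (j%:R / (n%:Z)%:~R : rat) \is a Num.int = false.
  rewrite intrEfloor fl eq_sym mulf_eq0 invr_eq0 pnatr_eq0 intr_eq0; lia.
by rewrite pmulrn /= -pmulrn subr0.
Qed.

Lemma saw0 : saw (0%:R / (n%:Z)%:~R) = 0.
Proof. by rewrite /saw mul0r rpred0. Qed.
Let t (j : nat) : rat := (-1) ^+ `|r j|%N.
Let G (x : nat) : rat := if x == 0%N then 0 else (-1) ^+ x * (x%:R / n%:R - h%:~R / 2).

Lemma key (j : nat) : (j < n)%N ->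
  h%:~R * ((-1) ^+ (j + `|gint ((h * j%:Z)%:~R / (n%:Z)%:~R)|%N)%N * saw (j%:R / (n%:Z)%:~R))
  = t j * (q j)%:~R + G `|r j|%N.
Proof.
move=> jn; rewrite gint_q sign_eq -/(t j).
case: (posnP j) => [j0|jpos].
  by rewrite j0 saw0 q0 r0 /G /= !mulr0.
rewrite saw_eq ?jpos // /G.
have -> : (`|r j|%N == 0%N) = false by apply/negbTE; rewrite absz_eq0 r_neq0 ?jpos.
have E := rat_eq j.
have -> : ((`|r j|%N)%:R : rat) = (r j)%:~R by rewrite pmulrn abszE ger0_norm ?r_ge0.
rewrite intrM -!pmulrn in E.
rewrite -/(t j).
have -> : h%:~R * (t j * (j%:R / n%:R - 1 / 2)) = t j * (h%:~R * j%:R / n%:R) - t j * (h%:~R / 2) by ring.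
rewrite E; ring.
Qed.
Lemma sumG m : n = m.*2.+1 -> \sum_(x < n) G x = m%:R / n%:R.
Proof.
move=> nm.
have HG x : G x = ((-1)^+x * x%:R / n%:R - h%:~R/2 * (-1)^+x) + (if x == 0%N then h%:~R/2 else 0).
  rewrite /G; case: eqP => [->|_]; rewrite ?expr0 ?mulr0; ring.
under eq_bigr => x _ do rewrite HG.
rewrite big_split /= big_split /= sumrN -mulr_suml -mulr_sumr nm.
have S0 (c : rat) : \sum_(i < m.*2.+1) (if (i : nat) == 0%N then c else 0) = c.
  by rewrite big_ord_recl big1 ?addr0.
rewrite S0.
rewrite alt1 alt2 mulr1; ring.
Qed.
Lemma main m : n = m.*2.+1 ->
  B1 h n = h%:~R / (4%:R * (n%:Z)%:~R) * Y h n + 1 / (2%:R * (n%:Z)%:~R) - 1 / 2%:R.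
Proof.
move=> nm.
rewrite /B1 /Y /=.
set F := fun j : nat => (-1) ^+ (j + `|gint ((h * j%:Z)%:~R / (n%:Z)%:~R)|%N)%N
       * (gint ((h * j%:Z)%:~R / (n%:Z)%:~R))%:~R : rat.
have -> : \sum_(1 <= j < n) F j = \sum_(0 <= j < n) F j.
  by rewrite (big_ltn n0) /F gint_q q0 mulr0 add0r.
set S := (X in _ = _ * (_ * X) + _ - _).
rewrite big_mkord.
have n0' : (n%:Z)%:~R != 0 :> rat by rewrite intr_eq0; lia.
have -> : h%:~R / (4%:R * (n%:Z)%:~R) * (4%:R * (n%:Z)%:~R * S) = h%:~R * S.
  by field; rewrite pnatr_eq0; lia.
rewrite /S [in RHS]big_mkord mulr_sumr.
rewrite [in RHS](eq_bigr (fun j : 'I_n => t j * (q j)%:~R + G `|r j|%N)); last first.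
  by move=> j _; exact: key.
rewrite big_split /= (reidx G) (sumG _ nm).
rewrite [in LHS](eq_bigr (fun j : 'I_n => t j * (q j)%:~R)); last first.
  by move=> j _; rewrite /F gint_q sign_eq.
rewrite -!pmulrn nm.
set N := (m.*2.+1)%:R : rat.
have NE : N = 2 * m%:R + 1 by rewrite /N -addn1 -mul2n natrD natrM.
have hn : 2 * m%:R + 1 != 0 :> rat by rewrite -NE /N pnatr_eq0.
rewrite NE; field; done.
Qed.

End S.


Theorem theorem13 (h k : int) :
  (0 < k)%R -> ~~ (2 %| h)%Z -> ~~ (2 %| k)%Z -> coprimez h k ->
  B1 h k = h%:~R / (4%:R * k%:~R) * Y h k + 1 / (2%:R * k%:~R) - 1 / 2%:R.
Proof.
case: k => [n|n] //= n0 hodd nodd cop.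
have n2 : (n%:Z %% 2)%Z = 1.
  move: nodd; case: dvdz_mod0P => // H _. have := modz_ge0 n (_ : 2 != 0). have := ltz_pmod n (_ : 0 < 2). lia.
have n0' : (0 < n)%N by lia.
apply: (main h n n0' hodd nodd cop (n %/ 2)%N).
rewrite -muln2. lia.
Qed.
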